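(* Let $\|\cdot\|_c$ and $\|\cdot\|_s$ be norms on $\mathbb{R}^d$, let $f(x)=\frac12\|x\|_c^2$, and suppose $g(x)=\frac12\|x\|_s^2$ is $L$-smooth with respect to $\|\cdot\|_s$. Let $\ell_{cs}\in(0,1]$ and $u_{cs}\in[1,\infty)$ satisfy $\ell_{cs}\|x\|_c\le\|x\|_s\le u_{cs}\|x\|_c$ for all $x$. For $\mu>0$ define $M(x)=\min_{u\in\mathbb{R}^d}\{f(u)+\frac1\mu g(x-u)\}$. Then: (1) $M$ is convex and $L/\mu$-smooth with respect to $\|\cdot\|_s$; (2) for all $x\in\mathbb{R}^d$, $(1+\mu/u_{cs}^2)M(x)\le f(x)\le(1+\mu/\ell_{cs}^2)M(x)$; (3) there exists a norm $\|\cdot\|_M$ on $\mathbb{R}^d$ such that $M(x)=\frac12\|x\|_M^2$ for all $x$.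
   Context: A convex differentiable function $h:\mathbb{R}^d\to\mathbb{R}$ is $L$-smooth with respect to a norm $\|\cdot\|$ if $h(y)\le h(x)+\langle\nabla h(x),y-x\rangle+\frac L2\|x-y\|^2$ for all $x,y\in\mathbb{R}^d$, where $\langle x,y\rangle=x^\top y$. The function $M$ is the generalized Moreau envelope of $f$ with respect to $g$ (the minimum is attained). *)

(* Defs.v *)
From mathcomp Require Import ssreflect ssrfun ssrbool eqtype ssrnat seq fintype bigop.
From Stdlib Require Import Reals.
Local Open Scope R_scope.

Definition vec (d : nat) := 'I_d -> R.

Definition vadd {d} (x y : vec d) : vec d := fun i => x i + y i.
Definition vsub {d} (x y : vec d) : vec d := fun i => x i - y i.
Definition vscale {d} (a : R) (x : vec d) : vec d := fun i => a * x i.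
Definition vzero {d} : vec d := fun _ => 0.

Definition inner {d} (x y : vec d) : R := \big[Rplus/0]_(i < d) (x i * y i).

(* Euclidean norm, used only to define (Frechet) differentiability;
   in finite dimension the choice of norm is irrelevant. *)
Definition eucl {d} (x : vec d) : R := sqrt (inner x x).

Definition is_norm {d} (N : vec d -> R) : Prop :=
  (forall x, 0 <= N x) /\
  (forall x, N x = 0 -> forall i, x i = 0) /\
  (forall a x, N (vscale a x) = Rabs a * N x) /\
  (forall x y, N (vadd x y) <= N x + N y).

Definition convex {d} (h : vec d -> R) : Prop :=
  forall x y t, 0 <= t <= 1 ->
    h (vadd (vscale t x) (vscale (1 - t) y)) <= t * h x + (1 - t) * h y.

Definition is_gradient {d} (h : vec d -> R) (G : vec d -> vec d) : Prop :=
  forall x eps, 0 < eps -> exists delta, 0 < delta /\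
    forall v, eucl v < delta ->
      Rabs (h (vadd x v) - h x - inner (G x) v) <= eps * eucl v.

Definition differentiable {d} (h : vec d -> R) : Prop :=
  exists G, is_gradient h G.

Definition L_smooth {d} (h : vec d -> R) (L : R) (N : vec d -> R) : Prop :=
  convex h /\
  exists G, is_gradient h G /\
    forall x y, h y <= h x + inner (G x) (vsub y x) + L / 2 * (N (vsub x y))^2.

Definition is_moreau_env {d} (f g : vec d -> R) (mu : R) (M : vec d -> R) : Prop :=
  forall x,
    (exists u, M x = f u + / mu * g (vsub x u)) /\
    (forall u, M x <= f u + / mu * g (vsub x u)).

(* Main.v *)
Require Import Defs.
From mathcomp Require Import ssreflect ssrfun ssrbool eqtype ssrnat seq fintype bigop.
From Stdlib Require Import Reals Lra FunctionalExtensionality ClassicalEpsilon.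
Local Open Scope R_scope.

Lemma inner_scale_l {d} a (x y : vec d) : inner (vscale a x) y = a * inner x y.
Proof.
unfold inner.
apply (big_rec2 (fun u v => u = a * v)); first by ring.
move=> i y1 y2 _ ->; unfold vscale; ring.
Qed.

Lemma inner_opp_r {d} (x y : vec d) : inner x (vscale (-1) y) = - inner x y.
Proof.
unfold inner.
apply (big_rec2 (fun u v => u = - v)); first by ring.
move=> i y1 y2 _ ->; unfold vscale; ring.
Qed.

Lemma eucl_opp {d} (x : vec d) : eucl (vscale (-1) x) = eucl x.
Proof.
unfold eucl, inner. f_equal. apply eq_bigr => i _. unfold vscale; ring.
Qed.

Lemma abs_m1 : Rabs (-1) = 1.
Proof. rewrite Rabs_Ropp Rabs_R1. done. Qed.

Lemma norm_opp {d} (N : vec d -> R) x : is_norm N -> N (vscale (-1) x) = N x.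
Proof. move=> [_ [_ [Hs _]]]. rewrite Hs abs_m1. ring. Qed.

Lemma norm_zero {d} (N : vec d -> R) : is_norm N -> N vzero = 0.
Proof.
move=> [_ [_ [Hs _]]].
have -> : (vzero : vec d) = vscale 0 vzero.
  apply functional_extensionality => i; unfold vscale, vzero; ring.
rewrite Hs Rabs_R0; ring.
Qed.

Lemma sq_convex {d} (N : vec d -> R) x y t : is_norm N -> 0 <= t <= 1 ->
  /2 * N (vadd (vscale t x) (vscale (1 - t) y)) ^2 <= t * (/2 * N x ^2) + (1 - t) * (/2 * N y ^2).
Proof.
move=> [Hp [_ [Hs Ht]]] Htt.
have H1 := Ht (vscale t x) (vscale (1-t) y).
rewrite !Hs (Rabs_pos_eq t) ?(Rabs_pos_eq (1-t)) in H1; try lra.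
have Hc := Hp (vadd (vscale t x) (vscale (1 - t) y)).
have Ha := Hp x. have Hb := Hp y.
set c := N (vadd _ _) in H1 Hc |- *.
set a := N x in H1 Ha |- *. set b := N y in H1 Hb |- *.
have H2 : c ^ 2 <= (t * a + (1 - t) * b) ^ 2 by apply pow_incr; lra.
have H3 : 0 <= t * (1 - t) * (a - b) ^ 2.
  apply Rmult_le_pos; [apply Rmult_le_pos; lra | apply pow2_ge_0].
nra.
Qed.
Theorem lemma1 (d : nat) (Nc Ns : vec d -> R) (L lcs ucs mu : R)
  (f g M : vec d -> R)
  (hNc : is_norm Nc) (hNs : is_norm Ns)
  (hf : forall x, f x = / 2 * (Nc x)^2)
  (hg : forall x, g x = / 2 * (Ns x)^2)
  (hgL : L_smooth g L Ns)
  (hl : 0 < lcs <= 1) (hu : 1 <= ucs)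
  (hcs : forall x, lcs * Nc x <= Ns x /\ Ns x <= ucs * Nc x)
  (hmu : 0 < mu)
  (hM : is_moreau_env f g mu M) :
  (convex M /\ L_smooth M (L / mu) Ns) /\
  (forall x, (1 + mu / ucs^2) * M x <= f x /\ f x <= (1 + mu / lcs^2) * M x) /\
  (exists NM : vec d -> R, is_norm NM /\ forall x, M x = / 2 * (NM x)^2).
Proof.
have Mge : forall x u, M x <= f u + / mu * g (vsub x u) by move=> x u; apply (proj2 (hM x)).
have Mex : forall x, exists u, M x = f u + / mu * g (vsub x u) by move=> x; apply (proj1 (hM x)).
pose proof hNc as [Nc0 [Ncd [Ncs Nct]]].
pose proof hNs as [Ns0 [Nsd [Nss Nst]]].
have Mnn : forall x, 0 <= M x.
  move=> x; case: (Mex x) => u ->; rewrite !hf !hg.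
  have := pow2_ge_0 (Nc u); have := pow2_ge_0 (Ns (vsub x u)).
  have := Rinv_0_lt_compat _ hmu. nra.
have Hlow : forall x, f x <= (1 + mu / lcs^2) * M x.
  move=> x; case: (Mex x) => u ->; rewrite !hf hg.
  have Htri : Nc x <= Nc u + Nc (vsub x u).
    have E : vadd u (vsub x u) = x.
      apply functional_extensionality => i; unfold vadd, vsub; ring.
    have H := Nct u (vsub x u); rewrite E in H; exact H.
  have Hb := proj1 (hcs (vsub x u)).
  have := Nc0 x; have := Nc0 u; have := Nc0 (vsub x u).
  set a := Nc u in Htri |- *. set b := Nc (vsub x u) in Htri Hb |- *.
  set s := Ns (vsub x u) in Hb |- *. set c := Nc x in Htri |- *.
  move=> Hb0 Ha0 Hc0.
  have Hs2 : (lcs * b) ^ 2 <= s ^ 2.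
    apply pow_incr; split; [apply Rmult_le_pos; lra | lra].
  have Hc2 : c ^ 2 <= (a + b) ^ 2 by apply pow_incr; lra.
  have Hl2 : 0 < lcs ^ 2 by nra.
  have K1 : (lcs^2 + mu) * (mu * a^2 + (lcs*b)^2) = lcs^2 * mu * (a+b)^2 + (mu*a - lcs^2*b)^2 by ring.
  have K2 : lcs^2 * mu * c^2 <= (lcs^2 + mu) * (mu * a^2 + s^2).
    have := pow2_ge_0 (mu*a - lcs^2*b).
    have P1 : (lcs^2 + mu) * (lcs*b)^2 <= (lcs^2 + mu) * s^2 by apply Rmult_le_compat_l; lra.
    have P2 : lcs^2 * mu * c^2 <= lcs^2 * mu * (a+b)^2.
      apply Rmult_le_compat_l; [apply Rmult_le_pos; lra | lra].
    nra.
  have E : (1 + mu / lcs ^ 2) * (/ 2 * a ^ 2 + / mu * (/ 2 * s ^ 2)) - /2 * c^2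
     = ((lcs^2 + mu) * (mu * a^2 + s^2) - lcs^2 * mu * c^2) / (2 * lcs^2 * mu)
     by field; lra.
  have : 0 <= ((lcs^2 + mu) * (mu * a^2 + s^2) - lcs^2 * mu * c^2) / (2 * lcs^2 * mu).
    apply Rmult_le_pos; [lra | apply Rlt_le, Rinv_0_lt_compat; nra].
  lra.
have Hup : forall x, (1 + mu / ucs^2) * M x <= f x.
  move=> x.
  pose t := ucs^2 / (mu + ucs^2).
  have Hu2 : 0 < ucs^2 by nra.
  have Ht0 : 0 <= t by apply Rmult_le_pos; [lra | apply Rlt_le, Rinv_0_lt_compat; lra].
  have Ht1 : 1 - t = mu / (mu + ucs^2) by unfold t; field; lra.
  have Ht1p : 0 <= 1 - t by rewrite Ht1; apply Rmult_le_pos; [lra | apply Rlt_le, Rinv_0_lt_compat; lra].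
  have H := Mge x (vscale t x).
  have E : vsub x (vscale t x) = vscale (1 - t) x.
    apply functional_extensionality => i; unfold vsub, vscale; ring.
  rewrite E hf hg Ncs Nss !Rabs_pos_eq // in H.
  have Hs := proj2 (hcs x). have := Ns0 x. have := Nc0 x.
  rewrite hf.
  set c := Nc x in H Hs |- *. set s := Ns x in H Hs |- *. move=> Hc0 Hs0.
  have H2 : ((1 - t) * s) ^ 2 <= ((1 - t) * (ucs * c)) ^ 2.
    apply pow_incr; split; [apply Rmult_le_pos; lra | apply Rmult_le_compat_l; lra].
  have H3 : M x <= / 2 * (t * c) ^ 2 + / mu * (/ 2 * ((1 - t) * (ucs * c)) ^ 2).
    have := Rinv_0_lt_compat _ hmu. nra.
  have E2 : (1 + mu / ucs^2) * (/ 2 * (t * c) ^ 2 + / mu * (/ 2 * ((1 - t) * (ucs * c)) ^ 2)) = /2 * c^2.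
    rewrite Ht1; unfold t; field; lra.
  rewrite -E2. apply Rmult_le_compat_l; last exact H3.
  have : 0 < mu / ucs^2 by apply Rdiv_lt_0_compat. lra.
have Hsc1 : forall a x, M (vscale a x) <= a^2 * M x.
  move=> a x; case: (Mex x) => u Hu.
  have H := Mge (vscale a x) (vscale a u).
  have E : vsub (vscale a x) (vscale a u) = vscale a (vsub x u).
    apply functional_extensionality => i; unfold vsub, vscale; ring.
  rewrite E hf hg Ncs Nss !Rpow_mult_distr !pow2_abs in H.
  rewrite Hu hf hg. apply (Rle_trans _ _ _ H). right; ring.
have Hsc : forall a x, M (vscale a x) = a^2 * M x.
  move=> a x; case: (Req_dec a 0) => Ha.
    have := Hsc1 a x; have := Mnn (vscale a x); rewrite Ha; lra.
  apply Rle_antisym; first exact: Hsc1.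
  have E : vscale (/a) (vscale a x) = x.
    apply functional_extensionality => i; unfold vscale; field; exact Ha.
  have H := Hsc1 (/a) (vscale a x); rewrite E in H.
  have E2 : a^2 * ((/a)^2 * M (vscale a x)) = M (vscale a x) by field.
  rewrite -E2; apply Rmult_le_compat_l; [apply pow2_ge_0 | exact H].
have Mconv : convex M.
  move=> x y t Ht.
  case: (Mex x) => ux Hux; case: (Mex y) => uy Huy.
  have H := Mge (vadd (vscale t x) (vscale (1 - t) y)) (vadd (vscale t ux) (vscale (1 - t) uy)).
  have E : vsub (vadd (vscale t x) (vscale (1 - t) y)) (vadd (vscale t ux) (vscale (1 - t) uy))
        = vadd (vscale t (vsub x ux)) (vscale (1 - t) (vsub y uy)).
    apply functional_extensionality => i; unfold vsub, vadd, vscale; ring.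
  rewrite E in H.
  have Hf := sq_convex Nc ux uy t hNc Ht.
  have Hg := sq_convex Ns (vsub x ux) (vsub y uy) t hNs Ht.
  rewrite -!hf in Hf. rewrite -!hg in Hg.
  have Hg' := Rmult_le_compat_l _ _ _ (Rlt_le _ _ (Rinv_0_lt_compat _ hmu)) Hg.
  rewrite Hux Huy. 
  have E3 : / mu * (t * g (vsub x ux) + (1 - t) * g (vsub y uy)) = t * (/mu * g (vsub x ux)) + (1 - t) * (/mu * g (vsub y uy)) by ring.
  rewrite E3 in Hg'.
  have E4 : t * (f ux + / mu * g (vsub x ux)) + (1 - t) * (f uy + / mu * g (vsub y uy))
     = (t * f ux + (1 - t) * f uy) + (t * (/mu * g (vsub x ux)) + (1 - t) * (/mu * g (vsub y uy))) by ring.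
  rewrite E4. lra.
case: hgL => gconv [Gg [HGg Hsm]].
pose uf := fun x => proj1_sig (constructive_indefinite_description _ (Mex x)).
have Huf : forall x, M x = f (uf x) + / mu * g (vsub x (uf x)).
  move=> x; exact (proj2_sig (constructive_indefinite_description _ (Mex x))).
pose GM := fun x => vscale (/mu) (Gg (vsub x (uf x))).
have Hupper : forall x y, M y <= M x + inner (GM x) (vsub y x) + L / mu / 2 * Ns (vsub x y) ^ 2.
  move=> x y.
  have H1 := Mge y (uf x).
  have H2 := Hsm (vsub x (uf x)) (vsub y (uf x)).
  have E1 : vsub (vsub y (uf x)) (vsub x (uf x)) = vsub y x.
    apply functional_extensionality => i; unfold vsub; ring.
  have E2 : vsub (vsub x (uf x)) (vsub y (uf x)) = vsub x y.
    apply functional_extensionality => i; unfold vsub; ring.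
  rewrite E1 E2 in H2.
  have H3 := Rmult_le_compat_l _ _ _ (Rlt_le _ _ (Rinv_0_lt_compat _ hmu)) H2.
  rewrite (Huf x) /GM inner_scale_l.
  have E3 : / mu * (g (vsub x (uf x)) + inner (Gg (vsub x (uf x))) (vsub y x) + L / 2 * Ns (vsub x y) ^ 2)
    = / mu * g (vsub x (uf x)) + / mu * inner (Gg (vsub x (uf x))) (vsub y x) + L / mu / 2 * Ns (vsub x y) ^ 2
    by field; lra.
  rewrite E3 in H3. lra.
have Hg0 : forall eps, 0 < eps -> exists delta, 0 < delta /\
    forall v, eucl v < delta -> g v <= eps * eucl v.
  move=> eps Heps.
  case: (HGg vzero eps Heps) => delta [Hd Hdv].
  exists delta; split => // v Hv.
  have H1 := Hdv v Hv.
  have Hv' : eucl (vscale (-1) v) < delta by rewrite eucl_opp.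
  have H2 := Hdv _ Hv'.
  have E0 : forall w : vec d, vadd vzero w = w.
    move=> w; apply functional_extensionality => i; unfold vadd, vzero; ring.
  rewrite !E0 eucl_opp inner_opp_r in H1 H2.
  have gz : g vzero = 0 by rewrite hg norm_zero //; ring.
  have go : g (vscale (-1) v) = g v by rewrite !hg norm_opp.
  rewrite gz go in H2. rewrite gz in H1.
  have := Rle_abs (g v - 0 - inner (Gg vzero) v).
  have := Rle_abs (g v - 0 - - inner (Gg vzero) v).
  lra.
have Hgrad : is_gradient M GM.
  move=> x eps Heps.
  have Hep : 0 < eps * mu / (Rabs L + 1).
    apply Rdiv_lt_0_compat; [nra | have := Rabs_pos L; lra].
  case: (Hg0 _ Hep) => delta [Hd Hdv].
  exists delta; split => // v Hv.
  have Hgv := Hdv v Hv.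
  have U1 := Hupper x (vadd x v).
  have U2 := Hupper x (vsub x v).
  have C := Mconv (vadd x v) (vsub x v) (/2) ltac:(lra).
  have E1 : vsub (vadd x v) x = v by apply functional_extensionality => i; unfold vsub, vadd; ring.
  have E2 : vsub x (vadd x v) = vscale (-1) v by apply functional_extensionality => i; unfold vsub, vadd, vscale; ring.
  have E3 : vsub (vsub x v) x = vscale (-1) v by apply functional_extensionality => i; unfold vsub, vscale; ring.
  have E4 : vsub x (vsub x v) = v by apply functional_extensionality => i; unfold vsub; ring.
  have E5 : vadd (vscale (/2) (vadd x v)) (vscale (1 - /2) (vsub x v)) = x
    by apply functional_extensionality => i; unfold vsub, vadd, vscale; field.
  rewrite E1 E2 norm_opp // in U1. rewrite E3 E4 inner_opp_r in U2. rewrite E5 in C.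
  have Pn : 0 <= / mu * / 2 * Ns v ^ 2.
    apply Rmult_le_pos; [apply Rmult_le_pos; [apply Rlt_le, Rinv_0_lt_compat; lra | lra] | apply pow2_ge_0].
  have Ka : L / mu / 2 * Ns v ^ 2 <= Rabs L * (/ mu * / 2 * Ns v ^ 2).
    have -> : L / mu / 2 * Ns v ^ 2 = L * (/ mu * / 2 * Ns v ^ 2) by field; lra.
    apply Rmult_le_compat_r => //; apply Rle_abs.
  have Kb : - (L / mu / 2 * Ns v ^ 2) <= Rabs L * (/ mu * / 2 * Ns v ^ 2).
    have -> : - (L / mu / 2 * Ns v ^ 2) = (- L) * (/ mu * / 2 * Ns v ^ 2) by field; lra.
    apply Rmult_le_compat_r => //; rewrite -(Rabs_Ropp L); apply Rle_abs.
  apply Rle_trans with (Rabs L * (/ mu * / 2 * Ns v ^ 2)).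
    apply Rabs_le; lra.
  have -> : Rabs L * (/ mu * / 2 * Ns v ^ 2) = Rabs L * / mu * g v by rewrite hg; ring.
  have He := sqrt_pos (inner v v).
  have HL := Rabs_pos L.
  apply Rle_trans with (Rabs L * / mu * (eps * mu / (Rabs L + 1) * eucl v)).
    apply Rmult_le_compat_l => //; apply Rmult_le_pos => //; apply Rlt_le, Rinv_0_lt_compat; lra.
  have -> : Rabs L * / mu * (eps * mu / (Rabs L + 1) * eucl v) = (eps * eucl v) * (Rabs L / (Rabs L + 1)) by field; lra.
  rewrite -{2}(Rmult_1_r (eps * eucl v)).
  apply Rmult_le_compat_l; first by (apply Rmult_le_pos; unfold eucl; lra).
  apply Rmult_le_reg_r with (Rabs L + 1); first lra.
  rewrite Rmult_1_l; unfold Rdiv; rewrite Rmult_assoc Rinv_l; lra.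
split; [split => //; split => //; exists GM; split => // | split].
  move=> x; split; [exact: Hup | exact: Hlow].
exists (fun x => sqrt (2 * M x)).
have Msq : forall x, M x = / 2 * sqrt (2 * M x) ^ 2.
  move=> x; rewrite pow2_sqrt; [field | have := Mnn x; lra].
split; last exact Msq.
have Hdef : forall x, sqrt (2 * M x) = 0 -> forall i, x i = 0.
  move=> x H; apply Ncd.
  have Hm := Mnn x.
  have H2 : 2 * M x = 0 by apply sqrt_eq_0; [lra | exact H].
  have H3 := Hlow x. rewrite hf in H3.
  have := Nc0 x. have : Nc x ^ 2 <= 0 by nra. nra.
have Hz : forall x, sqrt (2 * M x) = 0 -> x = vzero.
  move=> x H; apply functional_extensionality => i; exact (Hdef x H i).
split; first by move=> x; apply sqrt_pos.
split; first exact Hdef.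
split.
  move=> a x; rewrite Hsc.
  have -> : 2 * (a ^ 2 * M x) = a ^ 2 * (2 * M x) by ring.
  rewrite sqrt_mult; [| apply pow2_ge_0 | have := Mnn x; lra].
  rewrite -Rsqr_pow2 sqrt_Rsqr_abs //.
move=> x y.
case: (Req_dec (sqrt (2 * M x)) 0) => Hx.
  have -> : vadd x y = y.
    rewrite (Hz x Hx); apply functional_extensionality => i; unfold vadd, vzero; ring.
  rewrite Hx; lra.
case: (Req_dec (sqrt (2 * M y)) 0) => Hy.
  have -> : vadd x y = x.
    rewrite (Hz y Hy); apply functional_extensionality => i; unfold vadd, vzero; ring.
  rewrite Hy; lra.
set p := sqrt (2 * M x) in Hx |- *. set q := sqrt (2 * M y) in Hy |- *.
have Hp : 0 < p by have := sqrt_pos (2 * M x); rewrite -/p; lra.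
have Hq : 0 < q by have := sqrt_pos (2 * M y); rewrite -/q; lra.
have Mx : M (vscale (/p) x) = /2.
  rewrite Hsc (Msq x) -/p; field; lra.
have My : M (vscale (/q) y) = /2.
  rewrite Hsc (Msq y) -/q; field; lra.
have C := Mconv (vscale (/p) x) (vscale (/q) y) (p / (p + q)).
have Ht : 0 <= p / (p + q) <= 1.
  split; first by apply Rlt_le, Rdiv_lt_0_compat; lra.
  apply Rmult_le_reg_r with (p + q); first lra.
  unfold Rdiv; rewrite Rmult_assoc Rinv_l; lra.
have E : vadd (vscale (p / (p + q)) (vscale (/ p) x)) (vscale (1 - p / (p + q)) (vscale (/ q) y))
   = vscale (/ (p + q)) (vadd x y).
  apply functional_extensionality => i; unfold vadd, vscale; field; lra.
have C' := C Ht. rewrite E Mx My Hsc in C'.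
have Hxy : 2 * M (vadd x y) <= (p + q) ^ 2.
  have E2 : 2 * M (vadd x y) = 2 * (p + q) ^ 2 * ((/ (p + q)) ^ 2 * M (vadd x y)) by field; lra.
  rewrite E2.
  have : (p / (p + q) * / 2 + (1 - p / (p + q)) * / 2) = /2 by field; lra.
  have := pow2_ge_0 (p + q). nra.
rewrite -(sqrt_pow2 (p + q)); last lra.
exact: sqrt_le_1_alt.
Qed.
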